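(* Let $x\in X(l_1,\dots,l_n,l_\infty)$ and let $S\subseteq\{1,\dots,n\}$ be a set of indices with $l_i$ equal for all $i\in S$. For every permutation $\sigma$ of $S$, the diagram obtained from $x$ by moving each label $z_i$, $i\in S$, to the position originally occupied by $z_{\sigma(i)}$ (keeping all other labels and the unlabelled arc configuration unchanged) lies in the same $J_n$-orbit as $x$.
   Context: Cactus group: $J_n$ is the group generated by $s_{p,q}$, $1\le p<q\le n$, subject to the relations $s_{p,q}^2=e$; $s_{p,q}s_{p',q'}=s_{p',q'}s_{p,q}$ if $[p,q]$ and $[p',q']$ are disjoint; $s_{p,q}s_{p',q'}s_{p,q}=s_{p+q-q',p+q-p'}$ if $p\le p'<q'\le q$. Arc diagrams: fix nonnegative integers $l_1,\dots,l_n,l_\infty$. On the boundary circle of a closed disc place $n+1$ marked positions: position $0$ (occupied by $z_\infty$) and positions $1,\dots,n$ following it clockwise. An arc diagram is a bijective assignment of labels $z_1,\dots,z_n$ to positions $1,\dots,n$ together with a finite collection of simple arcs in the disc, pairwise disjoint except at endpoints, each joining two distinct marked points, such that $z_j$ is an endpoint of exactly $l_j$ arcs ($j\in\{1,\dots,n,\infty\}$; $l_j$ is the valence). Parallel arcs are allowed; diagrams are up to isotopy, equivalently determined by the labelling and the number of arcs between each pair of marked points. $X(l_1,\dots,l_n,l_\infty)$ is the set of such diagrams. Action: $s_{p,q}$ ($1\le p<q\le n$) acts by cutting off positions $p,\dots,q$ with a chord $\ell$ (arcs isotoped to cross $\ell$ at most once), reflecting that region by the reflection reversing $\ell$ (label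 at position $p+t$ goes to position $q-t$, crossing points on $\ell$ reversed), leaving the rest unchanged and reconnecting arcs at $\ell$. Words act right to left; this is an action of $J_n$. *)

(* Defs.v *)
From mathcomp Require Import all_boot.
Set Implicit Arguments. Unset Strict Implicit. Unset Printing Implicit Defensive.

(* Conventions.
   - Marked positions on the circle are 'I_n.+1: position 0 is the position
     of z_oo, positions 1..n follow it clockwise.
   - Labels are also encoded in 'I_n.+1: label 0 stands for z_oo, label j
     (1 <= j <= n) stands for z_j.
   - Valences: l : 'I_n.+1 -> nat, l 0 = l_oo, l j = l_j.
   - A (raw) diagram is a pair (lab, arcs): lab P = label sitting at
     position P, arcs (P, Q) = number of arcs between positions P and Q. *)

Definition raw_diagram (n : nat) :=
  ({ffun 'I_n.+1 -> 'I_n.+1} * {ffun 'I_n.+1 * 'I_n.+1 -> nat})%type.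

Definition dlab n (x : raw_diagram n) := x.1.
Definition darcs n (x : raw_diagram n) := x.2.

Definition is_arc_diagram n (l : 'I_n.+1 -> nat) (x : raw_diagram n) : Prop :=
  [/\ injective (dlab x) /\
      dlab x ord0 = ord0,
      (forall P Q, darcs x (P, Q) = darcs x (Q, P)),
      (forall P, darcs x (P, P) = 0),
      (forall P Q R T : 'I_n.+1, P < Q -> Q < R -> R < T ->
         darcs x (P, R) = 0 \/ darcs x (Q, T) = 0)
    & (forall P, \sum_(Q < n.+1) darcs x (P, Q) = l (dlab x P))].

Section Action.
Variables (n p q : nat).

(* inside the region cut off by the chord ℓ *)
Definition inside (i : 'I_n.+1) : bool := (p <= i) && (i <= q).

Definition refl (i : 'I_n.+1) : 'I_n.+1 :=
  if inside i then inord (p + q - i) else i.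

Definition innerL : seq 'I_n.+1 := [seq inord k | k <- iota p (q - p).+1].
(* outer positions in the order their arcs meet ℓ (from the p-end):
   p-1, ..., 1, 0, n, ..., q+1 *)
Definition outerL : seq 'I_n.+1 :=
  [seq inord k | k <- rev (iota 0 p) ++ rev (iota q.+1 (n - q))].

(* the arcs crossing ℓ, as (inner end, outer end), in order along ℓ *)
Definition crossing (a : {ffun 'I_n.+1 * 'I_n.+1 -> nat}) :
    seq ('I_n.+1 * 'I_n.+1) :=
  flatten [seq flatten [seq nseq (a (i, o)) (i, o) | o <- outerL] | i <- innerL].

(* after reflection, the k-th crossing point keeps its outer segment and gets
   the reflection of the inner segment of the (m+1-k)-th crossing point *)
Definition crossing' (a : {ffun 'I_n.+1 * 'I_n.+1 -> nat}) :=
  let C := crossing a in zip [seq refl io.1 | io <- rev C] [seq io.2 | io <- C].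

Definition act_arcs (a : {ffun 'I_n.+1 * 'I_n.+1 -> nat}) :
    {ffun 'I_n.+1 * 'I_n.+1 -> nat} :=
  [ffun PQ : 'I_n.+1 * 'I_n.+1 =>
     let: (P, Q) := PQ in
     if inside P && inside Q then a (refl P, refl Q)
     else if ~~ inside P && ~~ inside Q then a (P, Q)
     else if inside P then count_mem (P, Q) (crossing' a)
     else count_mem (Q, P) (crossing' a)].

Definition act_lab (f : {ffun 'I_n.+1 -> 'I_n.+1}) : {ffun 'I_n.+1 -> 'I_n.+1} :=
  [ffun P => f (refl P)].

Definition cactus_act (x : raw_diagram n) : raw_diagram n :=
  (act_lab (dlab x), act_arcs (darcs x)).
End Action.

(* y lies in the J_n-orbit of x: since every generator s_{p,q} is an
   involution in J_n, the group elements are exactly the finite words in the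
   generators; words act right to left. *)
Definition same_Jn_orbit n (x y : raw_diagram n) : Prop :=
  exists w : seq (nat * nat),
    all (fun pq => (1 <= pq.1) && (pq.1 < pq.2) && (pq.2 <= n)) w /\
    foldr (fun pq d => cactus_act pq.1 pq.2 d) x w = y.

(* Main.v *)
Require Import Defs.
From mathcomp Require Import all_boot all_fingroup zify.
Set Implicit Arguments. Unset Strict Implicit. Unset Printing Implicit Defensive.

Lemma pairwise_rev_ (T : Type) (r : rel T) (s : seq T) :
  pairwise r (rev s) = pairwise (fun x y => r y x) s.
Proof.
elim: s => // x s IH; rewrite rev_cons -cats1 pairwise_cat IH /= andbT.
by rewrite allrel1r all_rev.
Qed.

Lemma pw_flat_nseq (T : eqType) (r : rel T) (f : T -> nat) (s : seq T) :
  reflexive r -> pairwise r s -> pairwise r (flatten [seq nseq (f x) x | x <- s]).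
Proof.
move=> rr; elim: s => //= x s IH /andP[hx hs]; rewrite pairwise_cat IH // andbT.
apply/andP; split.
  apply/allrelP => y z /nseqP[-> _] /flatten_mapP[w ws /nseqP[-> _]].
  by move/allP: hx; apply.
elim: (f x) => //= k ->; rewrite andbT; apply/allP => y /nseqP[-> _]; exact: rr.
Qed.

Lemma count_flat_nseq (T : eqType) (f : T -> nat) (s : seq T) k0 :
  uniq s -> count_mem k0 (flatten [seq nseq (f x) x | x <- s]) = if k0 \in s then f k0 else 0.
Proof.
elim: s => //= x s IH /andP[hx hs]; rewrite count_cat count_nseq IH // in_cons /=.
have [<-|ne] := eqVneq x k0.
  by rewrite (negbTE hx) /= mul1n addn0.
by [].
Qed.

Lemma flat_flat (A B C : Type) (h : A * B -> seq C) (I : seq A) (O : seq B) :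
  flatten [seq flatten [seq h (i, o) | o <- O] | i <- I] =
  flatten [seq h k | k <- [seq (i, o) | i <- I, o <- O]].
Proof.
elim: I => //= i I IH; rewrite IH map_cat flatten_cat; congr (_ ++ _).
by rewrite -map_comp.
Qed.

Lemma mem_zip_ (S T : eqType) (s : seq S) (t : seq T) z :
  z \in zip s t -> (z.1 \in s) /\ (z.2 \in t).
Proof.
elim: s t => [|x s IH] [|y t] //=; rewrite in_cons => /orP[/eqP -> /=|/IH[h1 h2]].
  by rewrite !in_cons !eqxx.
by rewrite !in_cons h1 h2 !orbT.
Qed.

Lemma pw_zip (S T : eqType) (r1 : rel S) (r2 : rel T) (s : seq S) (t : seq T) :
  pairwise r1 s -> pairwise r2 t ->
  pairwise (fun x y => r1 x.1 y.1 && r2 x.2 y.2) (zip s t).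
Proof.
elim: s t => [|x s IH] [|y t] //= /andP[hx hs] /andP[hy ht]; rewrite IH // andbT.
apply/allP => z /mem_zip_[z1 z2] /=; by rewrite (allP hx _ z1) (allP hy _ z2).
Qed.

Section S1.
Variables (n p q : nat).
Hypotheses (Hpq : p < q) (Hqn : q <= n).
Local Notation I := 'I_n.+1.
Local Notation ins := (@inside n p q).
Local Notation rf := (@refl n p q).


Lemma insE (i : I) : ins i = (p <= i) && (i <= q). Proof. by []. Qed.

Lemma val_rf (i : I) : (rf i : nat) = if ins i then p + q - i else i.
Proof.
rewrite /refl; case: ifP => //; rewrite insE => /andP[h1 h2].
rewrite inordK //; lia.
Qed.

Lemma ins_rf (i : I) : ins (rf i) = ins i.
Proof. rewrite !insE val_rf insE; case: ifP => // /andP[h1 h2]; apply/andP; lia. Qed.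

Lemma rfK : involutive rf.
Proof.
move=> i; apply: ord_inj; rewrite !val_rf ins_rf.
case: (boolP (ins i)) => //; rewrite insE => /andP[h1 h2]; lia.
Qed.

Lemma rf_inj : injective rf. Proof. exact: inv_inj rfK. Qed.

Lemma mem_innerL (i : I) : (i \in innerL n p q) = ins i.
Proof.
apply/mapP/idP.
  case=> k; rewrite mem_iota => /andP[h1 h2] ->; rewrite insE inordK; lia.
rewrite insE => /andP[h1 h2]; exists (i : nat); first by rewrite mem_iota; lia.
by rewrite inord_val.
Qed.

Lemma uniq_innerL : uniq (innerL n p q).
Proof.
rewrite map_inj_in_uniq ?iota_uniq // => k1 k2; rewrite !mem_iota => h1 h2 /(congr1 (@nat_of_ord _)).
rewrite !inordK; lia.
Qed.

Lemma mem_outerL (i : I) : (i \in outerL n p q) = ~~ ins i.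
Proof.
apply/mapP/idP.
  case=> k; rewrite mem_cat !mem_rev !mem_iota => h ->; rewrite insE inordK; lia.
rewrite insE => h; exists (i : nat); last by rewrite inord_val.
rewrite mem_cat !mem_rev !mem_iota; have := ltn_ord i; lia.
Qed.

Lemma uniq_outerL : uniq (outerL n p q).
Proof.
rewrite map_inj_in_uniq.
  rewrite cat_uniq !rev_uniq !iota_uniq /= andbT; apply/hasPn => k.
  rewrite mem_rev !mem_iota /= => h; rewrite mem_rev mem_iota; lia.
move=> k1 k2; rewrite !mem_cat !mem_rev !mem_iota => h1 h2 /(congr1 (@nat_of_ord _)).
rewrite !inordK; lia.
Qed.

Definition rnk (o : I) : nat :=
  if o < p then p - 1 - o else if q < o then p + n - o else 2 * n + 2 + o.

Lemma rnk_inj : injective rnk.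
Proof.
move=> a b h; apply: ord_inj; have ha := ltn_ord a; have hb := ltn_ord b.
move: h; rewrite /rnk; repeat (case: ifP => ?); lia.
Qed.

Definition lexle (x y : I * I) : bool :=
  ((x.1 : nat) < y.1) || (((x.1 : nat) == y.1) && (rnk x.2 <= rnk y.2)).

Lemma lexle_refl : reflexive lexle.
Proof. by move=> x; rewrite /lexle eqxx leqnn orbT. Qed.

Lemma lexle_trans : transitive lexle.
Proof. move=> y x z; rewrite /lexle; lia. Qed.

Lemma lexle_anti : antisymmetric lexle.
Proof.
move=> [a b] [c d]; rewrite /lexle /= => h.
have e1 : a = c by apply: ord_inj; lia.
have e2 : rnk b = rnk d by lia.
by rewrite e1 (rnk_inj e2).
Qed.

Lemma pw_innerL : pairwise (fun i j : I => (i : nat) < j) (innerL n p q).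
Proof.
rewrite pairwise_map; apply: (sub_in_pairwise (P := fun k => k \in iota p (q - p).+1) (r := ltn)).
  move=> k1 k2; rewrite !mem_iota /= => h1 h2 h; rewrite !inordK; lia.
  by apply/allP.
by rewrite -sorted_pairwise ?iota_ltn_sorted //; apply: ltn_trans.
Qed.

Lemma pw_outerL : pairwise (fun i j : I => rnk i < rnk j) (outerL n p q).
Proof.
rewrite pairwise_map.
pose P := fun k => (k < p) || (q < k <= n).
apply: (sub_in_pairwise (P := P)
  (r := fun k1 k2 => (if k1 < p then p - 1 - k1 else p + n - k1) < (if k2 < p then p - 1 - k2 else p + n - k2))).
  move=> k1 k2; rewrite /P /= => h1 h2 h; rewrite /rnk !inordK; try lia.
  move: h; repeat (case: ifP => ?); lia.
  apply/allP => k; rewrite mem_cat !mem_rev !mem_iota /P; lia.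
have pwi : forall m k, pairwise ltn (iota m k).
  by move=> m k; rewrite -sorted_pairwise ?iota_ltn_sorted //; apply: ltn_trans.
rewrite pairwise_cat !pairwise_rev_; apply/and3P; split.
- apply/allrelP => k1 k2; rewrite !mem_rev !mem_iota => h1 h2.
  repeat (case: ifP => ?); lia.
- apply: (sub_in_pairwise (P := fun k => k < p) (r := ltn)); last by [].
    move=> k1 k2 h1 h2 h; move: h1 h2; rewrite !unfold_in /= => h1 h2.
    repeat (case: ifP => ?); lia.
  by apply/allP => k; rewrite mem_iota.
- apply: (sub_in_pairwise (P := fun k => q < k <= n) (r := ltn)); last by [].
    move=> k1 k2 h1 h2 h; move: h1 h2; rewrite !unfold_in /= => h1 h2.
    repeat (case: ifP => ?); lia.
  by apply/allP => k; rewrite mem_iota; lia.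
Qed.


Local Notation K := [seq (i, o) | i <- innerL n p q, o <- outerL n p q].
Local Notation arcs := {ffun I * I -> nat}.

Lemma crossingE (a : arcs) : crossing p q a = flatten [seq nseq (a k) k | k <- K].
Proof. by rewrite /crossing (flat_flat (fun k => nseq (a k) k)). Qed.

Lemma uniq_K : uniq K.
Proof. by rewrite allpairs_uniq ?uniq_innerL ?uniq_outerL // => -[? ?] [? ?] _ _. Qed.

Lemma mem_K (k : I * I) : (k \in K) = ins k.1 && ~~ ins k.2.
Proof.
apply/allpairsP/andP => [[[i o] /= [hi ho ->]]|[hi ho]].
  by rewrite -mem_innerL // -mem_outerL.
by exists k; rewrite mem_innerL // mem_outerL //; split => //; case: k {hi ho}.
Qed.

Lemma count_cross (a : arcs) k :
  count_mem k (crossing p q a) = if ins k.1 && ~~ ins k.2 then a k else 0.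
Proof. by rewrite crossingE count_flat_nseq ?uniq_K // mem_K. Qed.

Lemma mem_cross (a : arcs) k : k \in crossing p q a -> [/\ ins k.1, ~~ ins k.2 & 0 < a k].
Proof.
rewrite -has_pred1 has_count count_cross; case: ifP => // /andP[h1 h2] h; by split.
Qed.

Lemma pw_allpairs (Is Os : seq I) :
  pairwise (fun i j : I => (i : nat) < j) Is -> pairwise (fun i j : I => rnk i < rnk j) Os ->
  pairwise lexle [seq (i, o) | i <- Is, o <- Os].
Proof.
move=> + hO; elim: Is => //= i Is IH /andP[hi hIs].
rewrite pairwise_cat IH // andbT; apply/andP; split.
  apply/allrelP => x y /mapP[o _ ->] /allpairsP[[j o'] /= [hj _ ->]].
  by rewrite /lexle /= (allP hi j hj).
rewrite pairwise_map; apply: sub_pairwise hO => o o' h.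
by rewrite /lexle /= ltnn eqxx /= ltnW.
Qed.

Lemma pw_cross (a : arcs) : pairwise lexle (crossing p q a).
Proof.
rewrite crossingE; apply: pw_flat_nseq; first exact: lexle_refl.
apply: pw_allpairs; [exact: pw_innerL | exact: pw_outerL].
Qed.
Definition NC (a : arcs) := forall P Q R T : I, P < Q -> Q < R -> R < T -> a (P, R) = 0 \/ a (Q, T) = 0.
Definition SYM (a : arcs) := forall P Q, a (P, Q) = a (Q, P).

Lemma mem_cross' (a : arcs) z : z \in crossing' p q a -> ins z.1 /\ ~~ ins z.2.
Proof.
move=> /mem_zip_[/mapP[io hio ->] /mapP[io' hio' ->]]; rewrite ins_rf //.
rewrite mem_rev in hio; by have [? ? ?] := mem_cross hio; have [? ? ?] := mem_cross hio'.
Qed.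

Lemma rnk_out (o : I) : ~~ ins o -> rnk o = if o < p then p - 1 - o else p + n - o.
Proof. rewrite insE /rnk => h; case: ifP => // c; rewrite ifT //; lia. Qed.

Lemma pw_snd (a : arcs) : SYM a -> NC a ->
  pairwise (fun o o' => rnk o <= rnk o') [seq z.2 | z <- crossing p q a].
Proof.
move=> sym nc; rewrite pairwise_map.
apply: (sub_in_pairwise (P := mem (crossing p q a)) (r := lexle)); last first.
  exact: pw_cross.
  by apply/allP.
move=> [i1 o1] [i2 o2] /mem_cross[/= hi1 ho1 a1] /mem_cross[/= hi2 ho2 a2].
rewrite /lexle /= => /orP[hlt|/andP[_ //]].
rewrite leqNgt; apply/negP => hr; move: hr; rewrite !rnk_out //.
move: hi1 hi2 ho1 ho2; rewrite !insE => hi1 hi2 ho1 ho2.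
have ho1' := ltn_ord o1; have ho2' := ltn_ord o2.
have e1 := sym i1 o1; have e2 := sym i2 o2.
case: ifP => c2; case: ifP => c1 hr.
- have [] := nc o1 o2 i1 i2; [lia|lia|lia| |].
    by rewrite -e1 => h; rewrite h in a1.
  by rewrite -e2 => h; rewrite h in a2.
- have [] := nc o2 i1 i2 o1; [lia|lia|lia| |].
    by rewrite -e2 => h; rewrite h in a2.
  by move=> h; rewrite h in a1.
- lia.
- have [] := nc i1 i2 o1 o2; [lia|lia|lia| |].
    by move=> h; rewrite h in a1.
  by move=> h; rewrite h in a2.
Qed.
Lemma C'fst (a : arcs) : [seq z.1 | z <- crossing' p q a] = [seq rf io.1 | io <- rev (crossing p q a)].
Proof. by rewrite /crossing'; apply: unzip1_zip; rewrite !size_map size_rev. Qed.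

Lemma C'snd (a : arcs) : [seq z.2 | z <- crossing' p q a] = [seq io.2 | io <- crossing p q a].
Proof. by rewrite /crossing'; apply: unzip2_zip; rewrite !size_map size_rev. Qed.

Lemma pw_cross' (a : arcs) : SYM a -> NC a -> pairwise lexle (crossing' p q a).
Proof.
move=> sym nc.
have hF : pairwise (fun i j : I => (i : nat) <= j) [seq rf io.1 | io <- rev (crossing p q a)].
  rewrite pairwise_map pairwise_rev_.
  apply: (sub_in_pairwise (P := mem (crossing p q a)) (r := lexle)); last first.
    exact: pw_cross.
    by apply/allP.
  move=> x y /mem_cross[hx _ _] /mem_cross[hy _ _] /=; rewrite /lexle !val_rf hx hy.
  move: hx hy; rewrite !insE; lia.
have := pw_zip hF (pw_snd sym nc); rewrite -/(crossing' p q a).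
apply: sub_pairwise => x y /andP[h1 h2]; rewrite /lexle.
move: h1; rewrite leq_eqVlt => /orP[/eqP e|->//]; by rewrite e ltnn eqxx h2.
Qed.

Lemma crossing_act (a : arcs) : SYM a -> NC a ->
  crossing p q (act_arcs p q a) = crossing' p q a.
Proof.
move=> sym nc; apply: (sorted_eq_in (leT := lexle)).
- by move=> ? ? ? _ _ _; apply: lexle_trans.
- by move=> ? ? _ _; apply: lexle_anti.
- by rewrite sorted_pairwise; [exact: pw_cross | exact: lexle_trans].
- by rewrite sorted_pairwise; [exact: pw_cross' | exact: lexle_trans].
apply/allP => -[P Q] _; apply/eqP; rewrite count_cross /=.
case: ifP => [/andP[hP hQ]|hPQ].
  by rewrite ffunE hP (negbTE hQ).
apply/esym/count_memPn/negP => /mem_cross' [/= h1 h2].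
by rewrite h1 h2 in hPQ.
Qed.

Lemma cross'_act (a : arcs) : SYM a -> NC a ->
  crossing' p q (act_arcs p q a) = crossing p q a.
Proof.
move=> sym nc; rewrite {1}/crossing' crossing_act // map_rev.
have -> : [seq rf io.1 | io <- crossing' p q a] = map rf [seq io.1 | io <- crossing' p q a].
  by rewrite -map_comp.
rewrite C'fst C'snd -!map_rev revK -map_comp.
rewrite (eq_map (g := fun io => io.1)); last by move=> z /=; rewrite rfK.
exact: zip_unzip.
Qed.

Lemma act_invol (a : arcs) : SYM a -> NC a -> act_arcs p q (act_arcs p q a) = a.
Proof.
move=> sym nc; apply/ffunP => -[P Q]; rewrite ffunE.
case hP: (ins P); case hQ: (ins Q) => /=.
- by rewrite ffunE !ins_rf hP hQ /= !rfK.
- by rewrite cross'_act // count_cross /= hP hQ.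
- by rewrite cross'_act // count_cross /= hP hQ sym.
- by rewrite ffunE hP hQ.
Qed.
Definition vv (a : arcs) (X : I) := \sum_(Q < n.+1) a (X, Q).

Lemma cnt1 (L : seq (I * I)) i : count (fun z : I * I => z.1 == i) L = \sum_(o < n.+1) count_mem (i, o) L.
Proof.
elim: L => [|z L IH] /=; first by rewrite big1.
rewrite IH big_split /=; congr (_ + _); case: z => x y /=.
rewrite (bigD1 y) //= big1 ?addn0; last by move=> o /negbTE ho; rewrite xpair_eqE [y == o]eq_sym ho andbF.
by rewrite xpair_eqE eqxx andbT.
Qed.

Lemma cnt2 (L : seq (I * I)) o : count (fun z : I * I => z.2 == o) L = \sum_(i < n.+1) count_mem (i, o) L.
Proof.
elim: L => [|z L IH] /=; first by rewrite big1.
rewrite IH big_split /=; congr (_ + _); case: z => x y /=.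
rewrite (bigD1 x) //= big1 ?addn0; last by move=> i /negbTE hi; rewrite xpair_eqE [x == i]eq_sym hi.
by rewrite xpair_eqE eqxx.
Qed.

Lemma rf_out (X : I) : ~~ ins X -> rf X = X.
Proof. by rewrite /refl => /negbTE ->. Qed.

Lemma sumC'1 (a : arcs) X : \sum_(Q < n.+1 | ~~ ins Q) count_mem (X, Q) (crossing' p q a) =
   count (fun z : I * I => z.1 == X) (crossing' p q a).
Proof.
rewrite cnt1 [RHS](bigID (fun Q => ins Q)) /= [X in _ = X + _]big1 ?add0n // => Q hQ.
by apply/count_memPn/negP => /mem_cross' [_ /=]; rewrite hQ.
Qed.

Lemma sumC'2 (a : arcs) X : \sum_(Q < n.+1 | ins Q) count_mem (Q, X) (crossing' p q a) =
   count (fun z : I * I => z.2 == X) (crossing' p q a).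
Proof.
rewrite cnt2 [RHS](bigID (fun Q => ins Q)) /= [X in _ = _ + X]big1 ?addn0 // => Q hQ.
by apply/count_memPn/negP => /mem_cross' [/= h _]; rewrite h in hQ.
Qed.

Lemma cntC'1 (a : arcs) X : count (fun z : I * I => z.1 == X) (crossing' p q a) =
  \sum_(o < n.+1 | ~~ ins o) a (rf X, o) * ins X.
Proof.
have -> : count (fun z : I * I => z.1 == X) (crossing' p q a) = count (pred1 X) [seq z.1 | z <- crossing' p q a].
  by rewrite count_map.
rewrite C'fst count_map count_rev.
rewrite (eq_count (a2 := fun z : I * I => z.1 == rf X)); last first.
  by move=> z /=; apply/eqP/eqP => [<-|->]; rewrite rfK.
rewrite cnt1 (eq_bigr (fun o => if ins (rf X) && ~~ ins o then a (rf X, o) else 0)); last first.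
  by move=> o _; rewrite count_cross.
rewrite ins_rf [RHS]big_mkcond /=; apply: eq_bigr => o _.
by case: (ins X); case: (ins o); rewrite /= ?muln1 ?muln0.
Qed.

Lemma cntC'2 (a : arcs) X : count (fun z : I * I => z.2 == X) (crossing' p q a) =
  \sum_(i < n.+1 | ins i) a (i, X) * ~~ ins X.
Proof.
have -> : count (fun z : I * I => z.2 == X) (crossing' p q a) = count (pred1 X) [seq z.2 | z <- crossing' p q a].
  by rewrite count_map.
rewrite C'snd count_map.
rewrite (cnt2 (crossing p q a) X) (eq_bigr (fun i => if ins i && ~~ ins X then a (i, X) else 0)); last first.
  by move=> i _; rewrite count_cross.
rewrite [RHS]big_mkcond /=; apply: eq_bigr => i _.
by case: (ins X); case: (ins i); rewrite /= ?muln1 ?muln0.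
Qed.

Lemma vv_act (a : arcs) X : SYM a -> vv (act_arcs p q a) X = vv a (rf X).
Proof.
move=> sym; rewrite /vv (bigID (fun Q => ins Q)) /= [RHS](bigID (fun Q => ins Q)) /=.
case hX: (ins X).
- congr (_ + _).
    rewrite (eq_bigr (fun Q => a (rf X, rf Q))); last by move=> Q hQ; rewrite ffunE hX hQ.
    rewrite [RHS](reindex_inj rf_inj) /=; apply: eq_bigl => Q; by rewrite ins_rf.
  rewrite (eq_bigr (fun Q => count_mem (X, Q) (crossing' p q a))); last first.
    by move=> Q /negbTE hQ; rewrite ffunE hX hQ.
  rewrite sumC'1 cntC'1 hX; apply: eq_bigr => o _; by rewrite muln1.
- rewrite rf_out ?hX //; congr (_ + _); last first.
    by apply: eq_bigr => Q /negbTE hQ; rewrite ffunE hX hQ.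
  rewrite (eq_bigr (fun Q => count_mem (Q, X) (crossing' p q a))); last first.
    by move=> Q hQ; rewrite ffunE hX hQ.
  rewrite sumC'2 cntC'2 hX; apply: eq_bigr => o _; by rewrite muln1 sym.
Qed.

Definition DIAG (a : arcs) := forall P, a (P, P) = 0.

Lemma act_sym (a : arcs) : SYM a -> SYM (act_arcs p q a).
Proof.
move=> sym P Q; rewrite !ffunE; case hP: (ins P); case hQ: (ins Q) => //=.
Qed.

Lemma act_diag (a : arcs) : DIAG a -> DIAG (act_arcs p q a).
Proof. move=> dg P; rewrite !ffunE; case hP: (ins P) => //=. Qed.

Lemma act_adj (a : arcs) : q = p.+1 -> SYM a -> DIAG a -> vv a (inord p) = vv a (inord q) ->
  act_arcs p q a = a.
Proof.
move=> epq sym dg hv.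
set P0 : I := inord p; set Q0 : I := inord q.
have vP0 : (P0 : nat) = p by rewrite inordK //; lia.
have vQ0 : (Q0 : nat) = q by rewrite inordK //; lia.
have insP (X : I) : ins X = (X == P0) || (X == Q0).
  rewrite insE; apply/idP/idP.
    move=> h; have [] : (X : nat) = p \/ (X : nat) = q by lia.
      by move=> e; apply/orP; left; apply/eqP; apply: ord_inj; lia.
    by move=> e; apply/orP; right; apply/eqP; apply: ord_inj; lia.
  by move=> /orP[/eqP->|/eqP->]; rewrite ?vP0 ?vQ0; lia.
have PQ : P0 != Q0 by apply/eqP => e; have := congr1 (@nat_of_ord _) e; lia.
have rP : rf P0 = Q0 by apply: ord_inj; rewrite val_rf insP eqxx /= vP0 vQ0; lia.
have rQ : rf Q0 = P0 by rewrite -rP rfK.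
have sin (Y : I) : \sum_(o < n.+1 | ins o) a (Y, o) = a (Y, P0) + a (Y, Q0).
  rewrite (bigD1 P0) ?insP ?eqxx //=; congr (_ + _).
  rewrite (bigD1 Q0) /=; last by rewrite insP eqxx orbT eq_sym.
  rewrite big1 ?addn0 // => o; rewrite insP.
  by case/andP => /andP[/orP[/eqP->|/eqP->]]; rewrite ?eqxx.
have outeq : \sum_(o < n.+1 | ~~ ins o) a (P0, o) = \sum_(o < n.+1 | ~~ ins o) a (Q0, o).
  move: hv; rewrite /vv (bigID (fun o => ins o)) /= [X in _ = X](bigID (fun o => ins o)) /=.
  by rewrite !sin !dg add0n addn0 sym => /addnI.
have e1 : [seq z.1 | z <- crossing' p q a] = [seq z.1 | z <- crossing p q a].
  rewrite C'fst; apply: (sorted_eq (leT := fun i j : I => (i : nat) <= j)).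
  - by move=> y x z; apply: leq_trans.
  - by move=> x y h; apply: ord_inj; apply/eqP; rewrite eqn_leq.
  - rewrite sorted_pairwise; last by move=> y x z; apply: leq_trans.
    rewrite pairwise_map pairwise_rev_.
    apply: (sub_in_pairwise (P := mem (crossing p q a)) (r := lexle)); last first.
      exact: pw_cross.
      by apply/allP.
    move=> x y /mem_cross[hx _ _] /mem_cross[hy _ _] /=; rewrite /lexle !val_rf hx hy.
    move: hx hy; rewrite !insE; lia.
  - rewrite sorted_pairwise; last by move=> y x z; apply: leq_trans.
    rewrite pairwise_map; apply: sub_pairwise (pw_cross a) => x y.
    rewrite /lexle => /orP[/ltnW h|/andP[/eqP h _]]; [exact: h | exact: (eq_leq h)].
  apply/allP => X _; apply/eqP; rewrite !count_map count_rev.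
  rewrite (eq_count (a2 := fun z : I * I => z.1 == rf X)); last first.
    by move=> z /=; apply/eqP/eqP => [<-|->]; rewrite rfK.
  rewrite (eq_count (a1 := preim _ _) (a2 := fun z : I * I => z.1 == X)) //.
  rewrite !cnt1 !(eq_bigr _ (fun o _ => count_cross a (_, o))) /= ins_rf.
  case hX: (ins X); last by rewrite rf_out ?hX.
  rewrite -!big_mkcond /=.
  by move: hX; rewrite insP => /orP[/eqP->|/eqP->]; rewrite ?rP ?rQ.
have eC : crossing' p q a = crossing p q a.
  transitivity (zip [seq z.1 | z <- crossing' p q a] [seq z.2 | z <- crossing' p q a]).
    exact/esym/zip_unzip.
  by rewrite e1 C'snd; exact: zip_unzip.
apply/ffunP => -[P Q]; rewrite ffunE.
case hP: (ins P); case hQ: (ins Q) => /=.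
- move: hP hQ; rewrite !insP => /orP[/eqP->|/eqP->] /orP[/eqP->|/eqP->];
  by rewrite ?rP ?rQ ?dg // sym.
- by rewrite eC count_cross /= hP hQ.
- by rewrite eC count_cross /= hP hQ sym.
- by [].
Qed.




End S1.

Ltac split_if := match goal with |- context[if ?c then _ else _] =>
  lazymatch c with context [if _ then _ else _] => fail | _ => case: (boolP c) => ? end end.

Section S3.
Variable n : nat.
Local Notation I := 'I_n.+1.
Local Notation arcs := {ffun I * I -> nat}.

Definition validw (w : seq (nat * nat)) :=
  all (fun pq => (1 <= pq.1) && (pq.1 < pq.2) && (pq.2 <= n)) w.

Definition run (w : seq (nat * nat)) (x : raw_diagram n) :=
  foldr (fun pq d => cactus_act pq.1 pq.2 d) x w.

Definition good (a : arcs) (f : I -> I) :=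
  exists w, validw w /\ forall g : {ffun I -> I}, run w (g, a) = ([ffun X => g (f X)], a).

Lemma good_comp a f1 f2 : good a f1 -> good a f2 -> good a (fun X => f2 (f1 X)).
Proof.
move=> [w1 [v1 h1]] [w2 [v2 h2]]; exists (w1 ++ w2); split.
  by rewrite /validw all_cat; apply/andP.
move=> g; rewrite /run foldr_cat -/(run w2 _) h2 -/(run w1 _) h1.
by congr pair; apply/ffunP => X; rewrite !ffunE.
Qed.

Lemma good_id a : good a id.
Proof. by exists [::]; split => // g; congr pair; apply/ffunP => X; rewrite ffunE. Qed.

Lemma val_tperm (P Q X : I) :
  (tperm P Q X : nat) = if (X : nat) == P then (Q : nat) else if (X : nat) == Q then (P : nat) else X.
Proof.
case: tpermP => [->|->|h1 h2]; rewrite ?eqxx //.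
  by case: eqP => // e; rewrite -e; case: ifP.
have /negbTE -> : (X : nat) != P by apply/eqP => e; apply: h1; apply: ord_inj.
by have /negbTE -> : (X : nat) != Q by apply/eqP => e; apply: h2; apply: ord_inj.
Qed.

Lemma good_tperm (a : arcs) (P Q : I) : SYM a -> DIAG a -> NC a -> 0 < P -> P < Q ->
  vv a P = vv a Q -> good a (tperm P Q).
Proof.
move=> sym dg nc P0 PQ hv.
have Qn : (Q : nat) <= n by rewrite -ltnS.
have vrf p' q' (X : I) : p' < q' -> q' <= n ->
    (refl p' q' X : nat) = if (p' <= X) && (X <= q') then p' + q' - X else X.
  by move=> h1 h2; rewrite val_rf.
have [eQ|neQ] := eqVneq (Q : nat) P.+1.
  exists [:: ((P : nat), (Q : nat))]; split; first by rewrite /validw /= andbT; lia.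
  move=> g; rewrite /run /= /cactus_act /=; congr pair.
    apply/ffunP => X; rewrite !ffunE; congr (g _); apply: ord_inj.
    rewrite vrf // val_tperm; repeat split_if; lia.
  apply: act_adj => //; first by rewrite !inord_val.
have PQ' : P.+1 < Q by lia.
exists [:: ((P.+1 : nat), (Q : nat)); ((P : nat), (P.+1 : nat)); ((P.+1 : nat), (Q : nat))].
split; first by rewrite /validw /= andbT; lia.
move=> g; rewrite /run /= /cactus_act /=; congr pair.
  apply/ffunP => X; rewrite !ffunE; congr (g _); apply: ord_inj.
  rewrite !vrf //; try lia.
  rewrite val_tperm; repeat split_if; lia.
set b := act_arcs P.+1 Q a.
have symb : SYM b by apply: act_sym.
have dgb : DIAG b by apply: act_diag.
have adj : act_arcs P P.+1 b = b.
  apply: act_adj => //; try lia.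
  have e1 : (inord P : I) = P by rewrite inord_val.
  rewrite e1 /b !vv_act //.
  have -> : refl P.+1 Q P = P by apply: ord_inj; rewrite vrf //; repeat split_if; lia.
  have -> : refl P.+1 Q (inord P.+1) = Q.
    by apply: ord_inj; rewrite vrf // inordK; [repeat split_if; lia | lia].
  exact: hv.
by rewrite adj; exact: act_invol.
Qed.

End S3.

Section S4.
Variable n : nat.
Local Notation I := 'I_n.+1.
Local Notation arcs := {ffun I * I -> nat}.

Lemma good_ext (a : arcs) (f1 f2 : I -> I) : f1 =1 f2 -> good a f1 -> good a f2.
Proof.
move=> e [w [v h]]; exists w; split => // g; rewrite h; congr pair.
by apply/ffunP => X; rewrite !ffunE e.
Qed.

Lemma vv_tperm (a : arcs) (P Q Y : I) : vv a P = vv a Q -> vv a (tperm P Q Y) = vv a Y.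
Proof. by move=> h; case: tpermP => [->|->|_ _]. Qed.

Lemma good_perm (a : arcs) : SYM a -> DIAG a -> NC a ->
  forall k (s : {perm I}), #|[set X | s X != X]| <= k -> s ord0 = ord0 ->
  (forall X, vv a (s X) = vv a X) -> good a s.
Proof.
move=> sym dg nc; elim=> [|k IH] s hk h0 hv.
  apply: good_ext (good_id a) => X /=; apply/eqP; apply: contraT => hX.
  have : 0 < #|[set X | s X != X]| by apply/card_gt0P; exists X; rewrite inE eq_sym.
  by rewrite lt0n -leqn0 hk.
case: (pickP (fun X => s X != X)) => [P hP | none]; last first.
  by apply: good_ext (good_id a) => X /=; have := none X => /negbFE /eqP.
set Q := s P.
have PQ : P != Q by rewrite eq_sym.
have P0 : P != ord0 by apply: contraNneq hP => ->; rewrite h0.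
have Q0 : Q != ord0 by apply/eqP => e; move: P0; rewrite -h0 in e; rewrite (perm_inj e) eqxx.
have hvQ : vv a P = vv a Q by rewrite /Q hv.
set s' := (s * tperm P Q)%g.
have es' X : s' X = tperm P Q (s X) by rewrite permM.
have gs' : good a s'.
  apply: IH.
  - rewrite -ltnS; apply: leq_trans hk; apply: proper_card; apply/properP; split.
      apply/subsetP => X; rewrite !inE es' => H; apply/eqP => e; move: H; rewrite e.
      have XP : P != X by apply: contraNneq hP => ->; rewrite e.
      have XQ : Q != X.
        apply/eqP => eQ; have : s P = s X by rewrite e -eQ.
        by move/perm_inj => eP; rewrite eP eqxx in XP.
      by rewrite tpermD // eqxx.
    by exists P; rewrite !inE ?hP // es' /Q tpermR eqxx.
  - by rewrite es' h0 tpermD // eq_sym.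
  - by move=> X; rewrite es' vv_tperm.
have gt : good a (tperm P Q).
  have hP0 : 0 < P by rewrite lt0n; apply: contra P0 => /eqP e; apply/eqP; apply: ord_inj.
  have hQ0 : 0 < Q by rewrite lt0n; apply: contra Q0 => /eqP e; apply/eqP; apply: ord_inj.
  case: (ltngtP P Q) => h.
  - exact: good_tperm.
  - by rewrite tpermC; apply: good_tperm.
  - by move: PQ; rewrite (ord_inj h) eqxx.
apply: good_ext (good_comp gs' gt) => X /=; by rewrite es' tpermK.
Qed.
End S4.

Theorem mainTheorem3 (n : nat) (l : 'I_n.+1 -> nat) (x : raw_diagram n)
  (S : {set 'I_n.+1}) (sigma : {perm 'I_n.+1}) :
  is_arc_diagram l x ->
  ord0 \notin S ->
  {in S &, forall i j, l i = l j} ->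
  perm_on S sigma ->
  forall y : raw_diagram n,
    (forall P, sigma (dlab y P) = dlab x P) ->
    darcs y = darcs x ->
    same_Jn_orbit x y.
Proof.
case: x => f a; move=> [[finj f0] sym dg nc vl] h0S hl hsig [g b] /= hy hb.
rewrite /dlab /darcs /= in finj f0 sym dg nc vl hy hb; subst b.
have [pf pfE] : exists pf : {perm 'I_n.+1}, pf =1 f by exists (perm finj); apply: permE.
have [tau etau] : exists tau : {perm 'I_n.+1}, forall X, tau X = (pf^-1)%g ((sigma^-1)%g (f X)).
  by exists (pf * sigma^-1 * pf^-1)%g => X; rewrite !permM pfE.
have hsigV := perm_onV hsig.
have lV z : l ((sigma^-1)%g z) = l z.
  case hz: (z \in S); first by apply: hl; rewrite ?(perm_closed _ hsigV) hz.
  by rewrite (out_perm hsigV) // hz.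
have fV X : f (tau X) = (sigma^-1)%g (f X).
  by rewrite etau -pfE permKV.
have vvl X : vv a X = l (f X) by rewrite -vl.
have gt : good a tau.
  apply: (good_perm sym dg nc (leqnn _)).
    by apply: (perm_inj (s := pf)); rewrite (pfE (tau ord0)) (pfE ord0) fV f0 (out_perm hsigV).
  by move=> X; rewrite !vvl fV lV.
case: gt => w [vw hw]; exists w; split => //.
rewrite -/(run w (f, a)) hw; congr pair; apply/ffunP => X; rewrite ffunE fV -hy.
by rewrite permK.
Qed.
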